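(* Let $u(\mathbf{x},\Gamma_{\epsilon\boldsymbol{\omega}})$ be the scattered field of the impenetrable scattering problem with the randomly perturbed boundary $\Gamma_{\epsilon\boldsymbol{\omega}}=\Gamma+\epsilon\sum_{j=1}^m\omega_j\mathbf{v}_j$, and write $u(\mathbf{x})=u(\mathbf{x},\Gamma)$. Then, for $\mathbf{x}$ in the exterior of the (perturbed) scatterers, $$\mathbb{E}[u](\mathbf{x})=\mathbb{M}^1[u](\mathbf{x})=u(\mathbf{x})+\frac{\epsilon^2}{3!}\sum_{i=1}^m\delta_{[\mathbf{v}_i,\mathbf{v}_i]}u(\mathbf{x})+\mathcal{O}(\epsilon^4),$$ $$\mathbb{M}^2[u](\mathbf{x})=u^2(\mathbf{x})+\frac{\epsilon^2}{3}\sum_{i=1}^m\Big((\delta_{\mathbf{v}_i}u(\mathbf{x}))^2+u(\mathbf{x})\,\delta_{[\mathbf{v}_i,\mathbf{v}_i]}u(\mathbf{x})\Big)+\mathcal{O}(\epsilon^4),$$ and for every integer $n>2$, $$\mathbb{M}^n[u](\mathbf{x})=u^n(\mathbf{x})+\frac{\epsilon^2}{3}\sum_{i=1}^m\left(\binom n2u^{n-2}(\mathbf{x})(\delta_{\mathbf{v}_i}u(\mathbf{x}))^2+\binom n1u^{n-1}(\mathbf{x})\frac12\delta_{[\mathbf{v}_i,\mathbf{v}_i]}u(\mathbf{x})\right)+\mathcal{O}(\epsilon^4)$$ as $\epsilon\to0$.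
   Context: $D\subset\mathbb{R}^2$ is a bounded simply connected open set with smooth boundary $\Gamma$. For a boundary $\Gamma'$, the scattered field $u(\cdot,\Gamma')$ is defined outside the scatterer bounded by $\Gamma'$: the total field $u_{\rm tot}=\phi+u$ (with $\phi$ a plane wave or point-source incident field) satisfies $\nabla\cdot\alpha\nabla u_{\rm tot}+k^2u_{\rm tot}=0$ ($\alpha>0$, $k>0$ constants) in the exterior, with a sound-soft, sound-hard, or impedance boundary condition on $\Gamma'$, and $u$ satisfies the Sommerfeld radiation condition. The velocity fields $\mathbf{v}_1,\dots,\mathbf{v}_m\in C^\infty(\mathbb{R}^2,\mathbb{R}^2)$ have compact support in a band around $\Gamma$; $\delta_{\mathbf{v}_{i_1}}u$, $\delta_{[\mathbf{v}_{i_1},\mathbf{v}_{i_2}]}u,\dots$ denote the first, second, ... order shape derivatives of $u$ with respect to these velocity fields, and the field is assumed to admit the multivariate shape Taylor expansion $u(\mathbf{x},\Gamma_{\epsilon\boldsymbol\omega})=u(\mathbf{x})+\sum_{q=1}^{N}\frac{\epsilon^q}{q!}\sum_{i_1,\dots,i_q=1}^m\big(\prod_{j=1}^q\omega_{i_j}\big)\delta_{[\mathbf{v}_{i_1},\dots,\mathbf{v}_{i_q}]}u(\mathbf{x})+\mathcal{O}(\epsilon^{N+1})$ uniformly in $\boldsymbol\omega$. The random vector $\boldsymbol{\omega}=(\omega_1,\dots,\omega_m)$ has independent components, each uniformly distributed on $[-1,1]$, with density $P$. The $n$th moment is $\mathbb{M}^n[u](\mathbf{x})=\int[u(\mathbf{x},\Gamma_{\epsilon\boldsymbol\omega})]^nP(\boldsymbol\omega)\,d\boldsymbol\omega$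 and $\mathbb{E}[u]=\mathbb{M}^1[u]$. *)

(* Defs.v *)
From HB Require Import structures.
From mathcomp Require Import all_boot all_order all_algebra.
From mathcomp Require Import all_classical all_reals all_analysis.
From mathcomp Require Import complex.
Set Implicit Arguments. Unset Strict Implicit. Unset Printing Implicit Defensive.
Import Order.TTheory GRing.Theory Num.Theory.
Local Open Scope classical_set_scope.
Local Open Scope ring_scope.

Lemma ltN11 (R : realType) : (-1 < 1 :> R).
Proof. by rewrite (@lt_trans _ _ 0) ?oppr_lt0 ?ltr01. Qed.

Definition cR (R : realType) (r : R) : R[i] := Complex r 0.

Definition cabs (R : realType) (z : R[i]) : R :=
  Num.sqrt (complex.Re z ^+ 2 + complex.Im z ^+ 2).

Definition cexpect (d : measure_display) (T : measurableType d) (R : realType)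
  (P : probability T R) (f : T -> R[i]) : R[i] :=
  Complex (Rintegral P setT (fun t => complex.Re (f t)))
          (Rintegral P setT (fun t => complex.Im (f t))).

(* n-th moment  M^n[u] = E[ u(x, Gamma_{eps omega})^n ], with the random vector
   omega = (omega_1, ..., omega_m) given by random variables on (T, P), and
   U eps w = u(x, Gamma_{eps w}) for the fixed observation point x. *)
Definition moment (d : measure_display) (T : measurableType d) (R : realType)
  (P : probability T R) (m : nat) (omega : 'I_m -> {RV P >-> R})
  (U : R -> ('I_m -> R) -> R[i]) (n : nat) (eps : R) : R[i] :=
  cexpect P (fun t => U eps (fun i => omega i t) ^+ n).

Definition mutually_independent (d : measure_display) (T : measurableType d)
  (R : realType) (P : probability T R) (m : nat) (omega : 'I_m -> {RV P >-> R}) :=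
  forall B : 'I_m -> set R, (forall i, measurable (B i)) ->
    P (\bigcap_(i in [set: 'I_m]) (omega i @^-1` B i)) =
    (\prod_(i < m) P (omega i @^-1` B i))%E.

Definition uniform_m11 (d : measure_display) (T : measurableType d)
  (R : realType) (P : probability T R) (X : {RV P >-> R}) :=
  forall A : set R, measurable A ->
    P (X @^-1` A) = uniform_prob (ltN11 R) A.

Definition eq_O4 (R : realType) (f g : R -> R[i]) :=
  exists C delta : R, 0 < delta /\
    forall eps : R, `|eps| < delta -> cabs (f eps - g eps) <= C * `|eps| ^+ 4.

(* The multivariate shape Taylor expansion of order N, uniformly in
   omega in [-1,1]^m:
   U eps w = u0 + sum_{q=1}^N eps^q/q! sum_{i_1..i_q} (prod_j w_{i_j})
                    D q (i_1,...,i_q) + O(eps^(N+1)),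
   where D q (i_1,...,i_q) = delta_{[v_{i_1},...,v_{i_q}]} u (x). *)
Definition shape_taylor (R : realType) (m N : nat)
  (U : R -> ('I_m -> R) -> R[i]) (u0 : R[i])
  (D : forall q : nat, q.-tuple 'I_m -> R[i]) :=
  exists C delta : R, 0 < delta /\
    forall eps : R, `|eps| < delta ->
    forall w : 'I_m -> R, (forall i, -1 <= w i <= 1) ->
      cabs (U eps w -
            (u0 + \sum_(1 <= q < N.+1)
                    cR (eps ^+ q / (q`!)%:R) *
                    \sum_(s : q.-tuple 'I_m) cR (\prod_(j <- s) w j) * D q s))
        <= C * `|eps| ^+ N.+1.

(* Main.v *)
Require Import Defs.
From HB Require Import structures.
From mathcomp Require Import all_boot all_order all_algebra.
From mathcomp Require Import all_classical all_reals all_analysis.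
From mathcomp Require Import complex.
From mathcomp Require Import ring lra.
Import Order.TTheory GRing.Theory Num.Theory.
Local Open Scope classical_set_scope.
Local Open Scope ring_scope.
Set Implicit Arguments. Unset Strict Implicit. Unset Printing Implicit Defensive.
Section CplxLemmas.
Variable R : realType.
Implicit Types (z w : R[i]) (r s : R).

Lemma cRE r : cR r = (r%:C)%C. Proof. by []. Qed.
Lemma cRD r s : cR (r + s) = cR r + cR s. Proof. by rewrite !cRE rmorphD. Qed.
Lemma cRM r s : cR (r * s) = cR r * cR s. Proof. by rewrite !cRE rmorphM. Qed.
Lemma cRB r s : cR (r - s) = cR r - cR s. Proof. by rewrite !cRE rmorphB. Qed.
Lemma cRX r n : cR (r ^+ n) = cR r ^+ n. Proof. by rewrite !cRE rmorphXn. Qed.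
Lemma cR0 : cR (0 : R) = 0. Proof. by []. Qed.
Lemma cR1 : cR (1 : R) = 1. Proof. by []. Qed.
Lemma cRn n : cR (n%:R : R) = n%:R. Proof. by rewrite cRE rmorph_nat. Qed.
Lemma cRV r : cR (r^-1) = (cR r)^-1. Proof. by rewrite !cRE fmorphV. Qed.

Lemma cabsE z : cabs z = complex.Re `|z|.
Proof. by rewrite normc_def. Qed.
Lemma cabsC z : ((cabs z)%:C)%C = `|z|.
Proof. by rewrite normc_def. Qed.
Lemma cabs_ge0 z : 0 <= cabs z.
Proof. by rewrite /cabs sqrtr_ge0. Qed.
Lemma cabsM z w : cabs (z * w) = cabs z * cabs w.
Proof. by apply: complexI; rewrite rmorphM /= !cabsC normrM. Qed.
Lemma cabsD z w : cabs (z + w) <= cabs z + cabs w.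
Proof.
by rewrite -lecR rmorphD /= !cabsC ler_normD.
Qed.
Lemma cabsN z : cabs (- z) = cabs z.
Proof. by apply: complexI; rewrite !cabsC normrN. Qed.
Lemma cabsB z w : cabs (z - w) <= cabs z + cabs w.
Proof. by rewrite (le_trans (cabsD _ _)) // cabsN. Qed.
Lemma cabsX z n : cabs (z ^+ n) = cabs z ^+ n.
Proof. by apply: complexI; rewrite rmorphXn /= !cabsC normrX. Qed.
Lemma cabs_cR r : cabs (cR r) = `|r|.
Proof. by rewrite /cabs /= expr0n addr0 sqrtr_sqr. Qed.
Lemma cabs_nat n : cabs (n%:R : R[i]) = n%:R.
Proof. by rewrite -cRn cabs_cR normr_nat. Qed.
Lemma Re_le_cabs z : `|complex.Re z| <= cabs z.
Proof.
rewrite /cabs -sqrtr_sqr; apply: ler_wsqrtr; rewrite lerDl sqr_ge0 //.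
Qed.
Lemma Im_le_cabs z : `|complex.Im z| <= cabs z.
Proof.
rewrite /cabs -sqrtr_sqr; apply: ler_wsqrtr; rewrite lerDr sqr_ge0 //.
Qed.
Lemma cabs_le_ReIm z : cabs z <= `|complex.Re z| + `|complex.Im z|.
Proof.
rewrite /cabs; set a := complex.Re z; set b := complex.Im z.
rewrite -[X in _ <= X]ger0_norm ?addr_ge0 // -sqrtr_sqr; apply: ler_wsqrtr.
rewrite sqrrD -[a ^+ 2]real_normK ?num_real // -[b ^+ 2]real_normK ?num_real //.
by rewrite -addrA lerD2l lerDr mulrn_wge0 // mulr_ge0.
Qed.
Lemma ReM z w : complex.Re (z * w) = complex.Re z * complex.Re w - complex.Im z * complex.Im w.
Proof. by case: z; case: w. Qed.
Lemma ImM z w : complex.Im (z * w) = complex.Re z * complex.Im w + complex.Im z * complex.Re w.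
Proof. by case: z => a b; case: w => c d /=. Qed.
Lemma ReD z w : complex.Re (z + w) = complex.Re z + complex.Re w.
Proof. by case: z; case: w. Qed.
Lemma ImD z w : complex.Im (z + w) = complex.Im z + complex.Im w.
Proof. by case: z; case: w. Qed.
End CplxLemmas.
Section RealHelp.
Variable R : realType.

Lemma powdiff (x y : R) n : `|x| <= 1 -> `|y| <= 1 ->
  `|x ^+ n - y ^+ n| <= n%:R * `|x - y|.
Proof.
move=> x1 y1; rewrite subrXX normrM mulrC ler_wpM2r //.
apply: le_trans (ler_norm_sum _ _ _) _.
apply: le_trans (_ : _ <= \sum_(i < n) (1 : R)) _.
  apply: ler_sum => i _; rewrite normrM !normrX.
  by rewrite mulr_ile1 ?exprn_ge0 ?exprn_ile1.
by rewrite sumr_const card_ord.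
Qed.

Lemma muldiff (a1 b1 a2 b2 : R) : `|b1| <= 1 -> `|a2| <= 1 ->
  `|a1 * b1 - a2 * b2| <= `|a1 - a2| + `|b1 - b2|.
Proof.
move=> b11 a21.
have -> : a1 * b1 - a2 * b2 = (a1 - a2) * b1 + a2 * (b1 - b2) by ring.
apply: le_trans (ler_normD _ _) _; rewrite !normrM.
by apply: lerD; [rewrite ler_piMr | rewrite ler_piMl].
Qed.

Lemma prod_diff (I : Type) (r : seq I) (F G : I -> R) :
  (forall i, `|F i| <= 1) -> (forall i, `|G i| <= 1) ->
  `|\prod_(i <- r) F i - \prod_(i <- r) G i| <= \sum_(i <- r) `|F i - G i|.
Proof.
move=> F1 G1; elim: r => [|a r IH]; first by rewrite !big_nil subrr normr0.
rewrite !big_cons; apply: le_trans (muldiff _ _ _ _) _.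
- by rewrite normr_prod; apply: prodr_ile1 => i; rewrite normr_ge0 F1.
- exact: G1.
by rewrite lerD2l.
Qed.

Lemma prodF_le1 (I : Type) (r : seq I) (F : I -> R) :
  (forall i, `|F i| <= 1) -> `|\prod_(i <- r) F i| <= 1.
Proof.
by move=> F1; rewrite normr_prod; apply: prodr_ile1 => i; rewrite normr_ge0 F1.
Qed.

Lemma EFin_prodE (I : Type) (r : seq I) (F : I -> R) :
  (\prod_(i <- r) (F i)%:E)%E = (\prod_(i <- r) F i)%:E.
Proof.
elim: r => [|a r IH]; first by rewrite !big_nil.
by rewrite !big_cons IH -EFinM.
Qed.

Lemma indic_prod (U : Type) (I : finType) (A : I -> set U) (x : U) :
  \prod_(i : I) (\1_(A i) x : R) = \1_(\bigcap_(i in [set: I]) A i) x.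
Proof.
rewrite indicE; case: (pselect (forall i, A i x)) => [HA|HA].
  rewrite big1; last by move=> i _; rewrite indicE mem_set.
  by rewrite mem_set // => i _; exact: HA.
have [i Hi] : exists i, ~ A i x.
  by apply: contrapT => H; apply: HA => i; apply: contrapT => Hi; apply: H; exists i.
rewrite (bigD1 i) //= indicE memNset // mul0r memNset //.
by move=> H; apply: Hi; exact: H.
Qed.

End RealHelp.
Lemma binom_expand (C : comRingType) (u a1 a2 a3 b e : C) n :
  (u + (e * a1 + e ^+ 2 * a2 + e ^+ 3 * a3 + e ^+ 4 * b)) ^+ n =
  u ^+ n + e * ('C(n,1)%:R * u ^+ (n - 1) * a1)
  + e ^+ 2 * ('C(n,1)%:R * u ^+ (n - 1) * a2 + 'C(n,2)%:R * u ^+ (n - 2) * a1 ^+ 2)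
  + e ^+ 3 * ('C(n,1)%:R * u ^+ (n - 1) * a3
       + 2%:R * 'C(n,2)%:R * u ^+ (n - 2) * (a1 * a2) + 'C(n,3)%:R * u ^+ (n - 3) * a1 ^+ 3)
  + e ^+ 4 * ('C(n,1)%:R * u ^+ (n - 1) * b
       + 'C(n,2)%:R * u ^+ (n - 2) * (2%:R * a1 * (a3 + e * b) + (a2 + e * a3 + e ^+ 2 * b) ^+ 2)
       + 'C(n,3)%:R * u ^+ (n - 3) * (3%:R * a1 ^+ 2 * (a2 + e * a3 + e ^+ 2 * b)
            + 3%:R * e * a1 * (a2 + e * a3 + e ^+ 2 * b) ^+ 2 + e ^+ 2 * (a2 + e * a3 + e ^+ 2 * b) ^+ 3)
       + (a1 + e * a2 + e ^+ 2 * a3 + e ^+ 3 * b) ^+ 4 *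
         \sum_(4 <= k < n.+4) u ^+ (n - k) * (e * (a1 + e * a2 + e ^+ 2 * a3 + e ^+ 3 * b)) ^+ (k - 4) * 'C(n, k)%:R).
Proof.
set V := a1 + e * a2 + e ^+ 2 * a3 + e ^+ 3 * b.
set W := a2 + e * a3 + e ^+ 2 * b.
have -> : e * a1 + e ^+ 2 * a2 + e ^+ 3 * a3 + e ^+ 4 * b = e * V by rewrite /V; ring.
rewrite exprDn.
pose F i := u ^+ (n - i) * (e * V) ^+ i * 'C(n, i)%:R.
rewrite (eq_bigr (fun i : 'I_n.+1 => F i)); last by move=> i _; rewrite /F mulr_natr.
rewrite -(big_mkord xpredT F).
have -> : \sum_(0 <= i < n.+1) F i = \sum_(0 <= i < n.+4) F i.
  rewrite (@big_cat_nat _ _ _ n.+1 0 n.+4) //=; last by rewrite ltnS -addn3 leq_addr.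
  rewrite [X in _ = _ + X]big_nat_cond [X in _ = _ + X]big1 ?addr0 // => i /andP[/andP[Hi _] _].
  by rewrite /F bin_small ?mulr0.
rewrite big_ltn // big_ltn // big_ltn // big_ltn //.
have -> : \sum_(4 <= i < n.+4) F i = (e * V) ^+ 4 *
    \sum_(4 <= k < n.+4) u ^+ (n - k) * (e * V) ^+ (k - 4) * 'C(n, k)%:R.
  rewrite mulr_sumr; apply: eq_big_nat => k /andP[k4 _].
  rewrite /F; have -> : (e * V) ^+ k = (e * V) ^+ 4 * (e * V) ^+ (k - 4).
    by rewrite -exprD subnKC.
  ring.
rewrite /F bin0 subn0.
set Q := \sum_(4 <= k < n.+4) _.
set p1 := u ^+ (n - 1); set p2 := u ^+ (n - 2); set p3 := u ^+ (n - 3).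
set c1 : C := 'C(n,1)%:R; set c2 : C := 'C(n,2)%:R; set c3 : C := 'C(n,3)%:R.
rewrite /V /W; ring.
Qed.

Section Prob.
Import measurable_realfun.
Variables (R : realType) (d : measure_display) (T : measurableType d)
  (P : probability T R) (m : nat) (omega : 'I_m -> {RV P >-> R}).
Hypothesis Hind : mutually_independent omega.
Hypothesis Hunif : forall i, uniform_m11 (omega i).

Lemma Punif i (a b : R) : -1 <= a -> a <= b -> b <= 1 ->
  P (omega i @^-1` `[a, b[%classic) = ((b - a) / 2)%:E.
Proof.
move=> a1 ab b1.
rewrite Hunif; last exact: measurable_itv.
rewrite /uniform_prob integral_uniform_pdf.
have -> : `[a, b[%classic `&` `[-1, 1]%classic = `[a, b[%classic :> set R.
  apply: setIidl => x /=; rewrite !in_itv /= => /andP[ax xb].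
  by rewrite (le_trans a1 ax) /= ltW // (lt_le_trans xb b1).
rewrite (eq_integral (fun _ => (2^-1 : R)%:E)); last first.
  move=> x; rewrite inE /= in_itv /= => /andP[ax xb].
  rewrite /uniform_pdf (le_trans a1 ax) /= ltW ?(lt_le_trans xb b1) //.
  by rewrite opprK.
rewrite integral_cst /=; last exact: measurable_itv.
rewrite lebesgue_measure_itv /= lte_fin.
case: ltP => [abl|ba].
  by rewrite -EFinD -EFinM mulrC.
have -> : b = a by apply/eqP; rewrite eq_le ab ba.
by rewrite subrr mul0r mule0.
Qed.

Definition Om : set T := \bigcap_(i in [set: 'I_m]) (omega i @^-1` `[-1, 1[%classic).

Lemma mpre i (A : set R) : measurable A -> measurable (omega i @^-1` A).
Proof. by move=> mA; rewrite -[_ @^-1` _]setTI; exact: (measurable_funPT (omega i)). Qed.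

Lemma mOm : measurable Om.
Proof.
apply: fin_bigcap_measurable; first exact: finite_finset.
by move=> i _; apply: mpre; exact: measurable_itv.
Qed.

Lemma POm : P Om = 1%E.
Proof.
rewrite /Om Hind; last by move=> i; exact: measurable_itv.
rewrite big1 // => i _.
rewrite Punif ?lexx ?lerN10 //; congr (_%:E).
by rewrite opprK divff // pnatr_eq0.
Qed.

Lemma Om_in t : Om t -> forall i, -1 <= omega i t < 1.
Proof.
by move=> Ht i; have := Ht i I; rewrite /= in_itv.
Qed.

Definition E0 (g : T -> R) := Rintegral P Om g.
Definition bnd (g : T -> R) :=
  measurable_fun setT g /\ exists M, forall t, Om t -> `|g t| <= M.

Lemma bnd_ext g h : (forall t, g t = h t) -> bnd g -> bnd h.
Proof. by move=> gh; have -> : g = h by apply: funext. Qed.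

Lemma E0_ext g h : (forall t, Om t -> g t = h t) -> E0 g = E0 h.
Proof. by move=> gh; apply: eq_Rintegral => t /set_mem /gh. Qed.

Lemma bnd_int g : bnd g -> P.-integrable Om (EFin \o g).
Proof.
case=> mg [M HM]; apply: measurable_bounded_integrable.
- exact: mOm.
- by have := POm; rewrite /= => ->; rewrite ltry.
- exact: measurable_funS mg.
exists M; split; first exact: num_real.
by move=> y My t Ht; apply: le_trans (HM t Ht) (ltW My).
Qed.

Lemma bnd_cst c : bnd (fun _ => c).
Proof. by split; [exact: measurable_cst | exists `|c|]. Qed.

Lemma bndD g h : bnd g -> bnd h -> bnd (fun t => g t + h t).
Proof.
case=> mg [M HM] [mh [M' HM']]; split.
  exact: measurable_realfun.measurable_funD.
exists (M + M') => t Ht; apply: le_trans (ler_normD _ _) _.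
by apply: lerD; [exact: HM | exact: HM'].
Qed.

Lemma bndM g h : bnd g -> bnd h -> bnd (fun t => g t * h t).
Proof.
case=> mg [M HM] [mh [M' HM']]; split.
  exact: measurable_realfun.measurable_funM.
exists (M * M') => t Ht; rewrite normrM.
by apply: ler_pM => //; [exact: HM | exact: HM'].
Qed.

Lemma bndN g : bnd g -> bnd (fun t => - g t).
Proof.
move=> bg; apply: (bnd_ext _ (bndM (bnd_cst (-1)) bg)) => t.
by rewrite mulN1r.
Qed.

Lemma bnd_sum (I : Type) (r : seq I) (G : I -> T -> R) :
  (forall i, bnd (G i)) -> bnd (fun t => \sum_(i <- r) G i t).
Proof.
move=> bG; elim: r => [|a r IH].
  by apply: (bnd_ext _ (bnd_cst 0)) => t; rewrite big_nil.
by apply: (bnd_ext _ (bndD (bG a) IH)) => t; rewrite big_cons.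
Qed.

Lemma bnd_prod (I : Type) (r : seq I) (G : I -> T -> R) :
  (forall i, bnd (G i)) -> bnd (fun t => \prod_(i <- r) G i t).
Proof.
move=> bG; elim: r => [|a r IH].
  by apply: (bnd_ext _ (bnd_cst 1)) => t; rewrite big_nil.
by apply: (bnd_ext _ (bndM (bG a) IH)) => t; rewrite big_cons.
Qed.

Lemma E0D g h : bnd g -> bnd h -> E0 (fun t => g t + h t) = E0 g + E0 h.
Proof. by move=> bg bh; apply: RintegralD; [exact: mOm|exact: bnd_int|exact: bnd_int]. Qed.

Lemma E0Z c g : bnd g -> E0 (fun t => c * g t) = c * E0 g.
Proof. by move=> bg; apply: RintegralZl; [exact: mOm|exact: bnd_int]. Qed.

Lemma E0_cst c : E0 (fun _ => c) = c.
Proof.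
rewrite /E0 Rintegral_cst ?mOm //.
have -> : fine (P Om) = 1 by rewrite -[RHS]/(fine 1%E); congr fine; exact: POm.
  by rewrite mulr1.
exact: mOm.
Qed.

Lemma E0_sum (I : Type) (r : seq I) (G : I -> T -> R) :
  (forall i, bnd (G i)) ->
  E0 (fun t => \sum_(i <- r) G i t) = \sum_(i <- r) E0 (G i).
Proof.
move=> bG; elim: r => [|a r IH].
  rewrite big_nil; transitivity (E0 (fun _ => 0)); last exact: E0_cst.
  by apply: E0_ext => t _; rewrite big_nil.
rewrite big_cons -IH -E0D //; last exact: bnd_sum.
by apply: E0_ext => t _; rewrite big_cons.
Qed.

Lemma E0_le g M : bnd g -> (forall t, Om t -> `|g t| <= M) -> `|E0 g| <= M.
Proof.
move=> bg HM; apply: le_trans (le_normr_Rintegral mOm (bnd_int bg)) _.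
have bag : bnd (fun t => `|g t|).
  case: bg => mg [M' HM']; split; first exact: measurableT_comp.
  by exists M' => t Ht; rewrite normr_id; exact: HM'.
apply: le_trans (le_Rintegral mOm (bnd_int bag) (bnd_int (bnd_cst M)) _) _.
  by move=> t Ht; exact: HM.
by rewrite -/(E0 _) E0_cst.
Qed.

Lemma E0_indic (S : set T) : measurable S -> S `<=` Om ->
  E0 (\1_S) = fine (P S).
Proof.
move=> mS SOm; rewrite /E0 /Rintegral integral_indic //; last exact: mOm.
by rewrite setIidl.
Qed.


Section Grid.
Variable K : nat.
Hypothesis K0 : (0 < K)%N.

Definition hK : R := 2 / K%:R.
Definition q (a : nat) : R := -1 + a%:R * hK.
Definition B (a : nat) : set R := `[q a, q a.+1[%classic.

Lemma hK_gt0 : 0 < hK.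
Proof. by rewrite /hK divr_gt0 // ltr0n. Qed.

Lemma qS a : q a.+1 = q a + hK.
Proof. by rewrite /q -addn1 natrD mulrDl mul1r addrA. Qed.

Lemma qK : q K = 1.
Proof.
rewrite /q /hK mulrCA mulfV ?mulr1; last by rewrite pnatr_eq0 -lt0n.
by rewrite addrC -[2]/(1 + 1) -addrA subrr addr0.
Qed.

Lemma q_ge a : -1 <= q a.
Proof. by rewrite /q lerDl mulr_ge0 // ltW // hK_gt0. Qed.

Lemma q_le a : (a <= K)%N -> q a <= 1.
Proof.
move=> aK; rewrite -qK /q lerD2l ler_wpM2r ?ler_nat //.
exact: ltW hK_gt0.
Qed.

Lemma B_sub (a : 'I_K) x : B a x -> -1 <= x < 1.
Proof.
rewrite /B /= in_itv /= => /andP[ax xb].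
by rewrite (le_trans (q_ge a) ax) /= (lt_le_trans xb) // q_le.
Qed.

Lemma B_ex x : -1 <= x < 1 -> exists a : 'I_K, B a x.
Proof.
move=> /andP[x1 x2].
have y0 : 0 <= (x + 1) / hK.
  by apply: divr_ge0; [lra | exact: ltW hK_gt0].
have /andP[ny yn] := trunc_itv y0.
set n := Num.Def.trunc _ in ny yn.
have nK : (n < K)%N.
  rewrite -(ltr_nat R); apply: le_lt_trans ny _.
  rewrite ltr_pdivrMr ?hK_gt0 // /hK mulrCA mulfV ?mulr1; last by rewrite pnatr_eq0 -lt0n.
  by rewrite -[2]/(1 + 1) ltrD2r.
exists (Ordinal nK); rewrite /B /= in_itv /=; apply/andP; split.
  have H1 : n%:R * hK <= x + 1 by rewrite -ler_pdivlMr ?hK_gt0.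
  rewrite /q; lra.
have H2 : x + 1 < n.+1%:R * hK by rewrite -ltr_pdivrMr ?hK_gt0.
rewrite /q; lra.
Qed.

Lemma B_uniq (a b : nat) x : B a x -> B b x -> a = b.
Proof.
rewrite /B /= !in_itv /= => /andP[ax xa] /andP[bx xb].
have lt_ab : forall a b : nat, q a <= x -> x < q b.+1 -> (a <= b)%N.
  move=> a' b' ax' xb'; have := le_lt_trans ax' xb'.
  rewrite /q ltrD2l ltr_pM2r ?hK_gt0 // ltr_nat ltnS; exact.
by apply/eqP; rewrite eqn_leq !lt_ab.
Qed.

Lemma PB i (a : 'I_K) : P (omega i @^-1` B a) = (hK / 2)%:E.
Proof.
rewrite /B Punif ?q_ge ?q_le //; last by rewrite qS lerDl ltW // hK_gt0.
by rewrite qS addrAC subrr add0r.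
Qed.


Definition v (e : nat) (a : nat) : R :=
  (\sum_(k < e.+1) q a.+1 ^+ (e - k) * q a ^+ k) / e.+1%:R.
Definition mom1 (e : nat) : R := (1 - (-1) ^+ e.+1) / (2 * e.+1%:R).

Lemma v_h e a : v e a * hK = (q a.+1 ^+ e.+1 - q a ^+ e.+1) / e.+1%:R.
Proof.
rewrite subrXX /=; set S := \sum_(i < e.+1) _.
rewrite /v -/S qS (addrC (q a)) addrK.
by rewrite mulrAC (mulrC S).
Qed.

Lemma q0 : q 0 = -1.
Proof. by rewrite /q mul0r addr0. Qed.

Lemma sum_v e : \sum_(a < K) v e a * (hK / 2) = mom1 e.
Proof.
under eq_bigr do rewrite mulrA v_h.
rewrite -(big_mkord xpredT (fun a => (q a.+1 ^+ e.+1 - q a ^+ e.+1) / e.+1%:R / 2)).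
rewrite -!mulr_suml telescope_sumr // qK q0 expr1n /mom1.
by rewrite invfM mulrA mulrAC.
Qed.

Lemma qB_le1 (a : 'I_K) : `|q a| <= 1 /\ `|q a.+1| <= 1.
Proof.
have Ha : (a <= K)%N by apply: ltnW.
have Hb : (a.+1 <= K)%N by [].
by rewrite !ler_norml !q_le // !(le_trans _ (q_ge _)) // ?lerN2 ?ler_norml.
Qed.

Lemma v_approx e (a : 'I_K) x : B a x -> `|x ^+ e - v e a| <= e%:R * hK.
Proof.
move=> Bx; have /andP[x1 x2] := B_sub Bx.
have xn : `|x| <= 1 by rewrite ler_norml x1 ltW.
have [qa1 qb1] := qB_le1 a.
move: Bx; rewrite /B /= in_itv /= => /andP[ax xb].
have qs := qS a.
have dA : `|x - q a| <= hK by rewrite ler_norml; apply/andP; split; lra.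
have dB : `|x - q a.+1| <= hK by rewrite ler_norml; apply/andP; split; lra.
have E1 : x ^+ e - v e a =
    (\sum_(k < e.+1) (x ^+ e - q a.+1 ^+ (e - k) * q a ^+ k)) / e.+1%:R.
  rewrite sumrB sumr_const card_ord /v -mulr_natr.
  by field; rewrite addrC natr1 pnatr_eq0.
rewrite E1 normrM normfV normr_nat ler_pdivrMr ?ltr0n //.
apply: le_trans (ler_norm_sum _ _ _) _.
apply: le_trans (_ : _ <= \sum_(k < e.+1) (e%:R * hK)) _; last first.
  by rewrite sumr_const card_ord mulr_natr.
apply: ler_sum => k _.
have ke : (k <= e)%N by rewrite -ltnS.
rewrite -{1}(subnK ke) exprD.
apply: le_trans (muldiff _ _ _ _) _.
- by rewrite normrX exprn_ile1.
- by rewrite normrX exprn_ile1.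
apply: le_trans (lerD (powdiff _ xn qb1) (powdiff _ xn qa1)) _.
have -> : (e%:R : R) = (e - k)%:R + k%:R by rewrite -natrD subnK.
rewrite mulrDl.
by apply: lerD; apply: ler_wpM2l.
Qed.

Lemma v_le1 e (a : 'I_K) : `|v e a| <= 1.
Proof.
have [qa1 qb1] := qB_le1 a.
rewrite /v normrM normfV normr_nat ler_pdivrMr ?ltr0n // mul1r.
apply: le_trans (ler_norm_sum _ _ _) _.
apply: le_trans (_ : _ <= \sum_(k < e.+1) (1 : R)) _; last by rewrite sumr_const card_ord.
apply: ler_sum => k _; rewrite normrM !normrX.
by rewrite mulr_ile1 ?exprn_ge0 ?exprn_ile1.
Qed.

Definition fK e (x : R) : R := \sum_(a < K) v e a * \1_(B a) x.

Lemma fK_val e (a : 'I_K) x : B a x -> fK e x = v e a.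
Proof.
move=> Bx; rewrite /fK (bigD1 a) //= big1 ?addr0.
  by rewrite indicE mem_set // mulr1.
move=> b ba; rewrite indicE memNset ?mulr0 //.
move=> Bbx; move/negP: ba; apply; apply/eqP/val_inj => /=.
exact: B_uniq Bbx Bx.
Qed.

Lemma fK_approx e x : -1 <= x < 1 -> `|x ^+ e - fK e x| <= e%:R * hK /\ `|fK e x| <= 1.
Proof.
move=> /B_ex [a Ba]; rewrite (fK_val _ Ba); split; [exact: v_approx | exact: v_le1].
Qed.

Lemma indic_pre (f : T -> R) (A : set R) t : \1_A (f t) = \1_(f @^-1` A) t :> R.
Proof. by []. Qed.

Lemma bnd_indic (S : set T) : measurable S -> bnd (\1_S).
Proof.
move=> mS; split; first exact: measurable_realfun.measurable_indic.
exists 1 => t _; rewrite indicE; case: (_ \in _); rewrite ?normr0 ?normr1 //.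
Qed.

Lemma bnd_omegaX i n : bnd (fun t => omega i t ^+ n).
Proof.
split; first exact/measurable_realfun.measurable_funX/measurable_funPT.
exists 1 => t Ht.
have := Om_in Ht i.
case/andP => w1 w2.
by rewrite normrX exprn_ile1 // ler_norml w1 ltW.
Qed.

Lemma bnd_fK e i : bnd (fun t => fK e (omega i t)).
Proof.
apply: bnd_sum => a; apply: bndM; first exact: bnd_cst.
apply: (bnd_ext (fun t => esym (indic_pre _ _ t))).
by apply: bnd_indic; apply: mpre; exact: measurable_itv.
Qed.

Lemma E0B g h : bnd g -> bnd h -> E0 (fun t => g t - h t) = E0 g - E0 h.
Proof.
move=> bg bh; rewrite E0D //; last exact: bndN.
congr (_ + _).
rewrite (@E0_ext (fun t => - h t) (fun t => -1 * h t)); last by move=> t _; rewrite mulN1r.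
by rewrite E0Z // mulN1r.
Qed.

Variable E : 'I_m -> nat.

Definition Sphi (phi : {ffun 'I_m -> 'I_K}) : set T :=
  \bigcap_(i in [set: 'I_m]) (omega i @^-1` B (phi i)).

Lemma G_expand t : \prod_i fK (E i) (omega i t) =
  \sum_(phi : {ffun 'I_m -> 'I_K}) (\prod_i v (E i) (phi i)) * \1_(Sphi phi) t.
Proof.
rewrite /fK bigA_distr_bigA /=; apply: eq_bigr => phi _.
rewrite big_split /=; congr (_ * _).
rewrite /Sphi -indic_prod; apply: eq_bigr => i _; exact: indic_pre.
Qed.

Lemma mSphi phi : measurable (Sphi phi).
Proof.
apply: fin_bigcap_measurable; first exact: finite_finset.
by move=> i _; apply: mpre; exact: measurable_itv.
Qed.

Lemma Sphi_Om phi : Sphi phi `<=` Om.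
Proof.
move=> t Ht i _; have := Ht i I; rewrite /= => Hb.
by have := B_sub Hb; rewrite in_itv.
Qed.

Lemma E0_G : E0 (fun t => \prod_i fK (E i) (omega i t)) = \prod_i mom1 (E i).
Proof.
rewrite (E0_ext (fun t _ => G_expand t)) E0_sum; last first.
  by move=> phi; apply: bndM; [exact: bnd_cst | exact/bnd_indic/mSphi].
under [X in X = _]eq_bigr => phi _.
  rewrite [E0 _](_ : _ = E0 (fun t => (\prod_i v (E i) (phi i)) * \1_(Sphi phi) t)) //.
  rewrite E0Z; last exact/bnd_indic/mSphi.
  rewrite (E0_indic (mSphi phi) (@Sphi_Om phi)).
  rewrite /Sphi Hind; last by move=> i; exact: measurable_itv.
  rewrite (eq_bigr (fun _ => (hK / 2)%:E)); last by move=> i _; exact: PB.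
  rewrite EFin_prodE /= -big_split /=.
  over.
rewrite (eq_bigr (fun phi : {ffun 'I_m -> 'I_K} => \prod_i (v (E i) (phi i) * (hK / 2)))) //.
rewrite -(bigA_distr_bigA (fun (i : 'I_m) (a : 'I_K) => v (E i) a * (hK / 2))) /=; apply: eq_bigr => i _.
exact: sum_v.
Qed.

Lemma approx_G : `|E0 (fun t => \prod_i omega i t ^+ E i) - \prod_i mom1 (E i)|
  <= (\sum_i E i)%:R * hK.
Proof.
rewrite -E0_G -E0B; last 2 first.
- by apply: bnd_prod => i; exact: bnd_omegaX.
- by apply: bnd_prod => i; exact: bnd_fK.
apply: E0_le.
  by apply: bndD; [apply: bnd_prod => i; exact: bnd_omegaX |
    apply: bndN; apply: bnd_prod => i; exact: bnd_fK].
move=> t Ht.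
have H := fun i => fK_approx (E i) (Om_in Ht i).
apply: le_trans (prod_diff _ _ _) _.
- move=> i; rewrite normrX exprn_ile1 //.
  by have /andP[w1 w2] := Om_in Ht i; rewrite ler_norml w1 ltW.
- by move=> i; case: (H i).
rewrite natr_sum mulr_suml; apply: ler_sum => i _; by case: (H i).
Qed.
End Grid.

Lemma mom_prod (E : 'I_m -> nat) :
  E0 (fun t => \prod_i omega i t ^+ E i) = \prod_i mom1 (E i).
Proof.
apply/eqP; rewrite -subr_eq0 -normr_le0; apply/unstable.ler_gtP => z z0.
set c : R := (\sum_i E i)%:R * 2.
have c0 : 0 <= c by rewrite mulr_ge0.
set K := (Num.Def.trunc (c / z)).+1.
have K0 : (0 < K)%N by [].
apply: le_trans (approx_G K0 E) _.
have /andP[_ Hk] := trunc_itv (divr_ge0 c0 (ltW z0)).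
rewrite -/K in Hk.
rewrite /hK mulrA -/c ler_pdivrMr ?ltr0n //.
by rewrite -ler_pdivrMl // mulrC ltW.
Qed.

Definition momS (s : seq 'I_m) := E0 (fun t => \prod_(j <- s) omega j t).

Lemma prod_count (s : seq 'I_m) (w : 'I_m -> R) :
  \prod_(j <- s) w j = \prod_i w i ^+ count_mem i s.
Proof.
elim: s => [|a s IH].
  by rewrite big_nil big1 // => i _; rewrite expr0.
rewrite big_cons IH /=.
under [in RHS]eq_bigr do rewrite exprD.
rewrite big_split /=; congr (_ * _).
rewrite (bigD1 a) //= ?eqxx expr1 big1 ?mulr1 // => i /negbTE.
by rewrite eq_sym => ->; rewrite expr0.
Qed.

Lemma momS_count s : momS s = \prod_i mom1 (count_mem i s).
Proof.
rewrite -mom_prod; apply: E0_ext => t _; exact: prod_count.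
Qed.

Lemma mom1_odd e : odd e -> mom1 e = 0.
Proof.
by move=> oe; rewrite /mom1 -signr_odd /= oe /= expr0 subrr mul0r.
Qed.

Lemma mom1_0 : mom1 0 = 1.
Proof. by rewrite /mom1 expr1 opprK mulr1 divff // pnatr_eq0. Qed.

Lemma mom1_2 : mom1 2 = 3^-1.
Proof.
rewrite /mom1 -signr_odd /= expr1 opprK.
by rewrite -[1 + 1]/(2 : R) invfM mulrA divff ?mul1r // pnatr_eq0.
Qed.

Lemma size_count (s : seq 'I_m) : size s = (\sum_i count_mem i s)%N.
Proof.
elim: s => [|a s IH]; first by rewrite big1.
rewrite /= IH big_split /= [X in _ = X]addnC -[X in X = _]addn1; congr (_ + _)%N.
rewrite (bigD1 a) //= eqxx big1 // => i /negbTE.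
by rewrite eq_sym => ->.
Qed.

Lemma momS_odd s : odd (size s) -> momS s = 0.
Proof.
move=> os; rewrite momS_count.
case: (boolP [exists i, odd (count_mem i s)]) => [/existsP[i Hi]|].
  by rewrite (bigD1 i) //= mom1_odd // mul0r.
rewrite negb_exists => /forallP H.
move: os; rewrite size_count.
have : ~~ odd (\sum_i count_mem i s)%N.
  apply: (big_ind (fun x => ~~ odd x)) => //.
  by move=> x y ox oy; rewrite oddD (negbTE ox) (negbTE oy).
by move/negbTE => ->.
Qed.

Lemma momS_2 (a b : 'I_m) : momS [:: a; b] = if a == b then 3^-1 else 0.
Proof.
rewrite momS_count; case: eqP => [<-|ab].
  rewrite (bigD1 a) //= eqxx /= mom1_2 big1 ?mulr1 // => i /negbTE.
  by rewrite eq_sym => ->; rewrite mom1_0.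
rewrite (bigD1 a) //= eqxx /=.
have -> : (b == a) = false by apply/negbTE/eqP => H; apply: ab.
by rewrite mom1_odd // mul0r.
Qed.

Definition cmeas (f : T -> R[i]) :=
  measurable_fun setT (fun t => complex.Re (f t)) /\
  measurable_fun setT (fun t => complex.Im (f t)).
Definition cbnd (f : T -> R[i]) :=
  cmeas f /\ exists M, forall t, Om t -> cabs (f t) <= M.

Lemma cbnd_Re f : cbnd f -> bnd (fun t => complex.Re (f t)).
Proof.
case=> [[mR mI] [M HM]]; split => //; exists M => t Ht.
exact: le_trans (Re_le_cabs _) (HM t Ht).
Qed.

Lemma cbnd_Im f : cbnd f -> bnd (fun t => complex.Im (f t)).
Proof.
case=> [[mR mI] [M HM]]; split => //; exists M => t Ht.
exact: le_trans (Im_le_cabs _) (HM t Ht).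
Qed.

Lemma cmeas_ext f g : (forall t, f t = g t) -> cmeas f -> cmeas g.
Proof. by move=> fg; have -> : f = g by apply: funext. Qed.

Lemma cbnd_ext f g : (forall t, f t = g t) -> cbnd f -> cbnd g.
Proof. by move=> fg; have -> : f = g by apply: funext. Qed.

Lemma cmeas_cst z : cmeas (fun _ => z).
Proof. by split; exact: measurable_cst. Qed.

Lemma cmeasD f g : cmeas f -> cmeas g -> cmeas (fun t => f t + g t).
Proof.
case=> mf1 mf2 [mg1 mg2]; split.
  by apply: (eq_measurable_fun (fun t => complex.Re (f t) + complex.Re (g t))) => [t _|];
    [rewrite ReD | exact: measurable_realfun.measurable_funD].
by apply: (eq_measurable_fun (fun t => complex.Im (f t) + complex.Im (g t))) => [t _|];
  [rewrite ImD | exact: measurable_realfun.measurable_funD].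
Qed.

Lemma cmeasM f g : cmeas f -> cmeas g -> cmeas (fun t => f t * g t).
Proof.
case=> mf1 mf2 [mg1 mg2]; split.
  apply: (eq_measurable_fun (fun t => complex.Re (f t) * complex.Re (g t)
     - complex.Im (f t) * complex.Im (g t))) => [t _|]; first by rewrite ReM.
  by apply: measurable_realfun.measurable_funB; apply: measurable_realfun.measurable_funM.
apply: (eq_measurable_fun (fun t => complex.Re (f t) * complex.Im (g t)
   + complex.Im (f t) * complex.Re (g t))) => [t _|]; first by rewrite ImM.
by apply: measurable_realfun.measurable_funD; apply: measurable_realfun.measurable_funM.
Qed.

Lemma cmeas_cR g : measurable_fun setT g -> cmeas (fun t => cR (g t)).
Proof. by move=> mg; split => //=; exact: measurable_cst. Qed.

Lemma cbnd_cst z : cbnd (fun _ => z).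
Proof. by split; [exact: cmeas_cst | exists (cabs z)]. Qed.

Lemma cbndD f g : cbnd f -> cbnd g -> cbnd (fun t => f t + g t).
Proof.
case=> mf [M HM] [mg [M' HM']]; split; first exact: cmeasD.
exists (M + M') => t Ht; apply: le_trans (cabsD _ _) _.
by apply: lerD; [exact: HM | exact: HM'].
Qed.

Lemma cbndM f g : cbnd f -> cbnd g -> cbnd (fun t => f t * g t).
Proof.
case=> mf [M HM] [mg [M' HM']]; split; first exact: cmeasM.
exists (M * M') => t Ht; rewrite cabsM.
by apply: ler_pM; rewrite ?cabs_ge0 //; [exact: HM | exact: HM'].
Qed.

Lemma cbnd_cR g : bnd g -> cbnd (fun t => cR (g t)).
Proof.
case=> mg [M HM]; split; first exact: cmeas_cR.
by exists M => t Ht; rewrite cabs_cR; exact: HM.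
Qed.

Definition CE0 (f : T -> R[i]) : R[i] :=
  Complex (E0 (fun t => complex.Re (f t))) (E0 (fun t => complex.Im (f t))).

Lemma CE0_ext f g : (forall t, Om t -> f t = g t) -> CE0 f = CE0 g.
Proof.
by move=> fg; rewrite /CE0 (E0_ext (fun t Ht => congr1 _ (fg t Ht)))
  (E0_ext (fun t Ht => congr1 (@complex.Im _) (fg t Ht))).
Qed.

Lemma CE0D f g : cbnd f -> cbnd g -> CE0 (fun t => f t + g t) = CE0 f + CE0 g.
Proof.
move=> bf bg; rewrite /CE0.
rewrite (E0_ext (fun t _ => ReD (f t) (g t))) (E0_ext (fun t _ => ImD (f t) (g t))).
by rewrite !E0D //; [exact: cbnd_Im | exact: cbnd_Im | exact: cbnd_Re | exact: cbnd_Re].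
Qed.

Lemma CE0Ml z f : cbnd f -> CE0 (fun t => z * f t) = z * CE0 f.
Proof.
move=> bf; rewrite /CE0.
rewrite (E0_ext (fun t _ => ReM z (f t))) (E0_ext (fun t _ => ImM z (f t))).
have bR := cbnd_Re bf; have bI := cbnd_Im bf.
rewrite !E0D; last 4 first.
- exact: bndM (bnd_cst _) bI.
- exact: bndM (bnd_cst _) bR.
- exact: bndM (bnd_cst _) bR.
- exact: bndN (bndM (bnd_cst _) bI).
rewrite (@E0_ext (fun t => - (complex.Im z * complex.Im (f t)))
   (fun t => (- complex.Im z) * complex.Im (f t))); last by move=> t _; rewrite mulNr.
rewrite !E0Z //.
by case: z => a b /=; rewrite mulNr.
Qed.

Lemma CE0_cst z : CE0 (fun _ => z) = z.
Proof. by rewrite /CE0 !E0_cst; case: z. Qed.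

Lemma CE0_sum (I : Type) (r : seq I) (F : I -> T -> R[i]) :
  (forall i, cbnd (F i)) ->
  CE0 (fun t => \sum_(i <- r) F i t) = \sum_(i <- r) CE0 (F i).
Proof.
move=> bF; elim: r => [|a r IH].
  by rewrite big_nil (CE0_ext (g := fun _ => 0)) ?CE0_cst // => t _; rewrite big_nil.
have bS : cbnd (fun t => \sum_(i <- r) F i t).
  elim: r {IH} => [|b r IH']; first by apply: (cbnd_ext _ (cbnd_cst 0)) => t; rewrite big_nil.
  by apply: (cbnd_ext _ (cbndD (bF b) IH')) => t; rewrite big_cons.
rewrite big_cons -IH -CE0D //.
by apply: CE0_ext => t _; rewrite big_cons.
Qed.

Lemma cbnd_sum (I : Type) (r : seq I) (F : I -> T -> R[i]) :
  (forall i, cbnd (F i)) -> cbnd (fun t => \sum_(i <- r) F i t).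
Proof.
move=> bF; elim: r => [|b r IH']; first by apply: (cbnd_ext _ (cbnd_cst 0)) => t; rewrite big_nil.
by apply: (cbnd_ext _ (cbndD (bF b) IH')) => t; rewrite big_cons.
Qed.

Lemma CE0_cR g : bnd g -> CE0 (fun t => cR (g t)) = cR (E0 g).
Proof. by move=> bg; rewrite /CE0 /= E0_cst. Qed.

Lemma CE0_le f M : cbnd f -> (forall t, Om t -> cabs (f t) <= M) -> cabs (CE0 f) <= M + M.
Proof.
move=> bf HM; apply: le_trans (cabs_le_ReIm _) _; rewrite /CE0 /=.
apply: lerD; apply: E0_le.
- exact: cbnd_Re.
- by move=> t Ht; exact: le_trans (Re_le_cabs _) (HM t Ht).
- exact: cbnd_Im.
- by move=> t Ht; exact: le_trans (Im_le_cabs _) (HM t Ht).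
Qed.

Lemma PnOm : P (~` Om) = 0%E.
Proof.
rewrite probability_setC; last exact: mOm.
have -> : P Om = 1%E by exact: POm.
by rewrite subee.
Qed.

Lemma Rint_Om g : bnd g -> Rintegral P setT g = E0 g.
Proof.
move=> bg; have mg : measurable_fun setT g by case: bg.
have mC : measurable (~` Om) by apply: measurableC; exact: mOm.
have eT : [set: T] `\` ~` Om = Om by rewrite setTD setCK.
have ig : P.-integrable setT (EFin \o g).
  apply/integrableP; split; first exact/measurable_EFinP.
  rewrite (@ge0_negligible_integral _ _ _ P setT (~` Om)) //; last 2 first.
  - by apply: measurableT_comp => //; exact/measurable_EFinP.
  - exact: PnOm.
  rewrite eT; have := bnd_int bg; case/integrableP => _; exact.
rewrite /E0 /Rintegral; congr fine; rewrite -eT.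
apply: negligible_integral => //; exact: PnOm.
Qed.

Lemma cexpect_CE0 f : cbnd f -> cexpect P f = CE0 f.
Proof.
move=> bf; rewrite /cexpect /CE0 !Rint_Om //; [exact: cbnd_Im | exact: cbnd_Re].
Qed.

Definition nice (F : R -> T -> R[i]) :=
  (forall eps, cmeas (F eps)) /\
  exists M, forall eps, `|eps| < 1 -> forall t, Om t -> cabs (F eps t) <= M.

Lemma nice_cbnd F eps : nice F -> `|eps| < 1 -> cbnd (F eps).
Proof. by case=> mF [M HM] e1; split => //; exists M; exact: HM. Qed.

Lemma nice_ext F G : (forall eps t, F eps t = G eps t) -> nice F -> nice G.
Proof.
move=> FG; have -> : G = F by apply: funext => e; apply: funext => t; rewrite FG.
done.
Qed.

Lemma niceD F G : nice F -> nice G -> nice (fun eps t => F eps t + G eps t).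
Proof.
case=> mF [M HM] [mG [M' HM']]; split; first by move=> e; exact: cmeasD.
exists (M + M') => e e1 t Ht; apply: le_trans (cabsD _ _) _.
by apply: lerD; [exact: HM | exact: HM'].
Qed.

Lemma niceM F G : nice F -> nice G -> nice (fun eps t => F eps t * G eps t).
Proof.
case=> mF [M HM] [mG [M' HM']]; split; first by move=> e; exact: cmeasM.
exists (M * M') => e e1 t Ht; rewrite cabsM.
by apply: ler_pM; rewrite ?cabs_ge0 //; [exact: HM | exact: HM'].
Qed.

Lemma nice_t (g : T -> R[i]) : cbnd g -> nice (fun _ t => g t).
Proof. by case=> mg [M HM]; split => //; exists M => e _; exact: HM. Qed.

Lemma nice_f (phi : R -> R[i]) :
  (exists M, forall eps, `|eps| < 1 -> cabs (phi eps) <= M) -> nice (fun eps _ => phi eps).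
Proof.
case=> M HM; split; first by move=> e; exact: cmeas_cst.
by exists M => e e1 t _; exact: HM.
Qed.

Lemma nice_cst z : nice (fun _ _ => z).
Proof. by apply: nice_f; exists (cabs z). Qed.

Lemma nice_eps : nice (fun eps _ => cR eps).
Proof. by apply: nice_f; exists 1 => e e1; rewrite cabs_cR ltW. Qed.

Lemma nice_sum (I : Type) (r : seq I) (F : I -> R -> T -> R[i]) :
  (forall i, nice (F i)) -> nice (fun eps t => \sum_(i <- r) F i eps t).
Proof.
move=> nF; elim: r => [|a r IH].
  by apply: (nice_ext _ (nice_cst 0)) => e t; rewrite big_nil.
by apply: (nice_ext _ (niceD (nF a) IH)) => e t; rewrite big_cons.
Qed.

Lemma niceX F n : nice F -> nice (fun eps t => F eps t ^+ n).
Proof.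
move=> nF; elim: n => [|n IH].
  by apply: (nice_ext _ (nice_cst 1)) => e t; rewrite expr0.
by apply: (nice_ext _ (niceM nF IH)) => e t; rewrite exprS.
Qed.

Lemma bnd_omega i : bnd (fun t => omega i t).
Proof. by apply: (bnd_ext _ (bnd_omegaX i 1)) => t; rewrite expr1. Qed.

Lemma bnd_prodw (s : seq 'I_m) : bnd (fun t => \prod_(j <- s) omega j t).
Proof. by apply: bnd_prod => j; exact: bnd_omega. Qed.

Lemma cabs_sum (I : Type) (r : seq I) (F : I -> R[i]) :
  cabs (\sum_(i <- r) F i) <= \sum_(i <- r) cabs (F i).
Proof.
elim: r => [|a r IH]; first by rewrite !big_nil /cabs /= expr0n addr0 sqrtr0.
by rewrite !big_cons; apply: le_trans (cabsD _ _) _; rewrite lerD2l.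
Qed.

Lemma cpowdiff (a b : R[i]) n M : cabs a <= M -> cabs b <= M ->
  cabs (a ^+ n - b ^+ n) <= n%:R * M ^+ n.-1 * cabs (a - b).
Proof.
move=> aM bM; have M0 : 0 <= M by exact: le_trans (cabs_ge0 _) aM.
rewrite subrXX cabsM mulrC ler_wpM2r ?cabs_ge0 //.
apply: le_trans (cabs_sum _ _) _.
apply: le_trans (_ : _ <= \sum_(i < n) M ^+ n.-1) _; last by rewrite sumr_const card_ord mulr_natl.
apply: ler_sum => i _; rewrite cabsM !cabsX.
have -> : M ^+ n.-1 = M ^+ (n.-1 - i) * M ^+ i.
  by rewrite -exprD subnK // -ltnS (leq_trans (ltn_ord i)) // leqSpred.
by apply: ler_pM; rewrite ?exprn_ge0 ?cabs_ge0 // lerXn2r // ?nnegrE ?cabs_ge0.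
Qed.

Definition Poly (I : finType) (f : I -> seq 'I_m) (c : I -> R[i]) (w : 'I_m -> R) : R[i] :=
  \sum_(i : I) cR (\prod_(j <- f i) w j) * c i.

Lemma PolyM (I J : finType) f g c c' w :
  @Poly I f c w * @Poly J g c' w =
  @Poly (I * J)%type (fun p => f p.1 ++ g p.2) (fun p => c p.1 * c' p.2) w.
Proof.
rewrite /Poly mulr_suml; under eq_bigr do rewrite mulr_sumr.
rewrite pair_big /=; apply: eq_bigr => p _.
by rewrite big_cat cRM /=; ring.
Qed.

Lemma cbnd_Poly (I : finType) f c : cbnd (fun t => @Poly I f c (fun j => omega j t)).
Proof.
apply: cbnd_sum => i; apply: cbndM; last exact: cbnd_cst.
exact/cbnd_cR/bnd_prodw.
Qed.

Lemma CE0Mr z f : cbnd f -> CE0 (fun t => f t * z) = CE0 f * z.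
Proof.
move=> bf; rewrite mulrC -CE0Ml //; apply: CE0_ext => t _; exact: mulrC.
Qed.

Lemma CE0_Poly (I : finType) f c :
  CE0 (fun t => @Poly I f c (fun j => omega j t)) = \sum_i cR (momS (f i)) * c i.
Proof.
rewrite /Poly CE0_sum; last first.
  by move=> i; apply: cbndM; [exact/cbnd_cR/bnd_prodw | exact: cbnd_cst].
apply: eq_bigr => i _.
rewrite (CE0Mr (c i) (cbnd_cR (bnd_prodw (f i)))).
by rewrite CE0_cR //; exact: bnd_prodw.
Qed.

Lemma CE0_Poly_odd (I : finType) f c : (forall i, odd (size (f i))) ->
  CE0 (fun t => @Poly I f c (fun j => omega j t)) = 0.
Proof.
move=> Hf; rewrite CE0_Poly big1 // => i _.
by rewrite momS_odd // mul0r.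
Qed.

Lemma sum_tuple1 (F : 1.-tuple 'I_m -> R[i]) : \sum_s F s = \sum_i F [tuple i].
Proof.
rewrite (reindex (fun i : 'I_m => [tuple i])) //.
exists (fun s => thead s) => [i _ //|s _].
apply: val_inj; case: s => [[|a [|b l]] //= Hs].
Qed.

Lemma sum_tuple2 (F : 2.-tuple 'I_m -> R[i]) :
  \sum_s F s = \sum_i \sum_j F [tuple i; j].
Proof.
rewrite pair_big /= (reindex (fun p : 'I_m * 'I_m => [tuple p.1; p.2])) //.
exists (fun s => (thead s, thead (behead_tuple s))) => [[i j] _ //|s _].
apply: val_inj; case: s => [[|a [|b [|c l]]] //= Hs].
Qed.

Section Taylor.
Variables (N : nat) (U : R -> ('I_m -> R) -> R[i]) (u0 : R[i])
  (D : forall q : nat, q.-tuple 'I_m -> R[i]).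
Hypothesis HN : (3 <= N)%N.

Definition SS k (w : 'I_m -> R) : R[i] :=
  \sum_(s : k.-tuple 'I_m) cR (\prod_(j <- s) w j) * @D k s.
Definition Tay eps (w : 'I_m -> R) : R[i] :=
  u0 + \sum_(1 <= k < N.+1) cR (eps ^+ k / (k`!)%:R) * SS k w.
Definition wt t : 'I_m -> R := fun i => omega i t.
Definition A1 t := SS 1 (wt t).
Definition A2 t := cR (1 / 2) * SS 2 (wt t).
Definition A3 t := cR (1 / 6) * SS 3 (wt t).
Definition Bt eps t := \sum_(4 <= k < N.+1) cR (eps ^+ (k - 4) / (k`!)%:R) * SS k (wt t).

Lemma SS_Poly k w : SS k w = @Poly (k.-tuple 'I_m) (fun s => tval s) (@D k) w.
Proof. by []. Qed.

Lemma cbnd_SS k : cbnd (fun t => SS k (wt t)).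
Proof. exact: cbnd_Poly. Qed.

Lemma nice_SS k : nice (fun _ t => SS k (wt t)).
Proof. exact/nice_t/cbnd_SS. Qed.

Lemma nice_Bt : nice Bt.
Proof.
apply: nice_sum => k; apply: niceM; last exact: nice_SS.
apply: nice_f; exists `|(k`!)%:R^-1| => e e1.
rewrite cabs_cR normrM normrX ler_piMl //.
by rewrite exprn_ile1 // ltW.
Qed.

Lemma cR_div (x y : R) : cR (x / y) = cR x * cR (1 / y).
Proof. by rewrite -cRM div1r. Qed.

Lemma Tay_split eps t : Tay eps (wt t) =
  u0 + cR eps * A1 t + cR eps ^+ 2 * A2 t + cR eps ^+ 3 * A3 t + cR eps ^+ 4 * Bt eps t.
Proof.
have h1 : (1 < N.+1)%N by rewrite ltnS (leq_trans _ HN).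
have h2 : (2 < N.+1)%N by rewrite ltnS (leq_trans _ HN).
have h3 : (3 < N.+1)%N by rewrite ltnS.
rewrite /Tay big_ltn // big_ltn // big_ltn //.
have -> : \sum_(4 <= k < N.+1) cR (eps ^+ k / (k`!)%:R) * SS k (wt t) =
    cR eps ^+ 4 * Bt eps t.
  rewrite /Bt mulr_sumr; apply: eq_big_nat => k /andP[k4 _].
  rewrite mulrA -cRX -cRM mulrA -exprD subnKC //.
rewrite /A1 /A2 /A3.
rewrite (cR_div (eps ^+ 1)) (cR_div (eps ^+ 2)) (cR_div (eps ^+ 3)) !cRX.
have -> : (1`!)%:R = 1 :> R by [].
have -> : (2`!)%:R = 2 :> R by [].
have -> : (3`!)%:R = 6 :> R by [].
rewrite divr1 cR1 mulr1 expr1.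
ring.
Qed.


Lemma odd_tuple k s : odd k -> odd (size (tval (s : k.-tuple 'I_m))).
Proof. by rewrite size_tuple. Qed.

Lemma CE0_A1 : CE0 A1 = 0.
Proof. by apply: CE0_Poly_odd => s; rewrite size_tuple. Qed.

Lemma CE0_A3 : CE0 A3 = 0.
Proof.
rewrite /A3 CE0Ml; last exact: cbnd_SS.
by rewrite (@CE0_Poly_odd _ (fun s : 3.-tuple 'I_m => tval s)) ?mulr0 // => s; rewrite size_tuple.
Qed.

Lemma momS_t2 (i j : 'I_m) : momS [tuple i; j] = if i == j then 3^-1 else 0.
Proof. exact: momS_2. Qed.

Lemma momS_t11 (i j : 'I_m) :
  momS (tval [tuple i] ++ tval [tuple j]) = if i == j then 3^-1 else 0.
Proof. exact: momS_2. Qed.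

Lemma sum_diag (F : 'I_m -> 'I_m -> R[i]) :
  \sum_i \sum_j cR (if i == j then 3^-1 else 0) * F i j = cR (3^-1) * \sum_i F i i.
Proof.
rewrite mulr_sumr; apply: eq_bigr => i _.
rewrite (bigD1 i) //= eqxx big1 ?addr0 // => j /negbTE.
by rewrite eq_sym => ->; rewrite cR0 mul0r.
Qed.

Lemma CE0_A2 : CE0 A2 = cR (1 / 2) * (cR (3^-1) * \sum_i @D 2 [tuple i; i]).
Proof.
rewrite /A2 CE0Ml; last exact: cbnd_SS.
congr (_ * _).
rewrite (@CE0_Poly _ (fun s : 2.-tuple 'I_m => tval s)) sum_tuple2.
under eq_bigr do under eq_bigr do rewrite momS_t2.
exact: (sum_diag (fun i j => @D 2 [tuple i; j])).
Qed.

Lemma CE0_A1sq : CE0 (fun t => A1 t ^+ 2) = cR (3^-1) * \sum_i @D 1 [tuple i] ^+ 2.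
Proof.
rewrite (CE0_ext (g := fun t => @Poly (1.-tuple 'I_m * 1.-tuple 'I_m)%type
   (fun p => tval p.1 ++ tval p.2) (fun p => @D 1 p.1 * @D 1 p.2) (wt t))); last first.
  by move=> t _; rewrite expr2 /A1 !SS_Poly PolyM.
rewrite CE0_Poly.
rewrite -(pair_big xpredT xpredT (fun (s s' : 1.-tuple 'I_m) =>
   cR (momS (tval s ++ tval s')) * (@D 1 s * @D 1 s'))) /=.
rewrite sum_tuple1 /=; under eq_bigr do rewrite sum_tuple1 /=.
under eq_bigr do under eq_bigr do rewrite momS_t11.
rewrite (sum_diag (fun i j => @D 1 [tuple i] * @D 1 [tuple j])).
by congr (_ * _); apply: eq_bigr => i _ /=; rewrite expr2.
Qed.

Lemma CE0_A1A2 : CE0 (fun t => A1 t * A2 t) = 0.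
Proof.
rewrite (CE0_ext (g := fun t => cR (1 / 2) * @Poly (1.-tuple 'I_m * 2.-tuple 'I_m)%type
   (fun p => tval p.1 ++ tval p.2) (fun p => @D 1 p.1 * @D 2 p.2) (wt t))); last first.
  by move=> t _; rewrite /A1 /A2 !SS_Poly mulrCA PolyM.
rewrite CE0Ml; last exact: cbnd_Poly.
by rewrite CE0_Poly_odd ?mulr0 // => p; rewrite size_cat !size_tuple.
Qed.

Lemma CE0_A1cube : CE0 (fun t => A1 t ^+ 3) = 0.
Proof.
rewrite (CE0_ext (g := fun t => @Poly ((1.-tuple 'I_m * 1.-tuple 'I_m) * 1.-tuple 'I_m)%type
   (fun p => (tval p.1.1 ++ tval p.1.2) ++ tval p.2)
   (fun p => (@D 1 p.1.1 * @D 1 p.1.2) * @D 1 p.2) (wt t))); last first.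
  by move=> t _; rewrite /A1 !SS_Poly !exprS expr0 mulr1 mulrA PolyM PolyM.
by rewrite CE0_Poly_odd // => p; rewrite !size_cat !size_tuple.
Qed.


Lemma cmeasX f n : cmeas f -> cmeas (fun t => f t ^+ n).
Proof.
move=> mf; elim: n => [|n IH].
  by apply: (cmeas_ext _ (cmeas_cst 1)) => t; rewrite expr0.
by apply: (cmeas_ext _ (cmeasM mf IH)) => t; rewrite exprS.
Qed.

Lemma cbndB f g : cbnd f -> cbnd g -> cbnd (fun t => f t - g t).
Proof.
move=> bf bg; apply: (cbnd_ext _ (cbndD bf (cbndM (cbnd_cst (-1)) bg))) => t.
by rewrite mulN1r.
Qed.

Lemma cbndX f n : cbnd f -> cbnd (fun t => f t ^+ n).
Proof.
move=> bf; elim: n => [|n IH].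
  by apply: (cbnd_ext _ (cbnd_cst 1)) => t; rewrite expr0.
by apply: (cbnd_ext _ (cbndM bf IH)) => t; rewrite exprS.
Qed.

Ltac cb_step :=
  match goal with
  | |- cbnd (fun t => _ + _) => apply: cbndD
  | |- cbnd (fun t => _ * _) => apply: cbndM
  | |- cbnd (fun t => _ ^+ _) => apply: cbndX
  | |- _ => first [assumption | exact: cbnd_cst]
  end.

Lemma CE0_lin z a1 a2 a3 a4 f1 f2 f3 f4 :
  cbnd f1 -> cbnd f2 -> cbnd f3 -> cbnd f4 ->
  CE0 (fun t => z + a1 * f1 t + a2 * f2 t + a3 * f3 t + a4 * f4 t) =
  z + a1 * CE0 f1 + a2 * CE0 f2 + a3 * CE0 f3 + a4 * CE0 f4.
Proof.
move=> b1 b2 b3 b4.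
have bM a f : cbnd f -> cbnd (fun t => a * f t) by move=> bf; exact: cbndM (cbnd_cst a) bf.
rewrite CE0D; last 2 first.
- by repeat first [apply: cbndD | apply: bM | exact: cbnd_cst | assumption].
- exact: bM.
rewrite CE0D; last 2 first.
- by repeat first [apply: cbndD | apply: bM | exact: cbnd_cst | assumption].
- exact: bM.
rewrite CE0D; last 2 first.
- by apply: cbndD; [exact: cbnd_cst|exact: bM].
- exact: bM.
rewrite CE0D; [|exact: cbnd_cst|exact: bM].
by rewrite CE0_cst !CE0Ml.
Qed.

Lemma pow4_le (x : R) k : 0 <= x -> x <= 1 -> (4 <= k)%N -> x ^+ k <= x ^+ 4.
Proof.
move=> x0 x1 k4; rewrite -(subnKC k4) exprD ler_piMr ?exprn_ge0 //.
exact: exprn_ile1.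
Qed.

Hypothesis Htay : shape_taylor N U u0 D.
Hypothesis Hmeas : exists delta0 : R, 0 < delta0 /\ forall eps : R, `|eps| < delta0 ->
     measurable_fun setT (fun t => complex.Re (U eps (fun i => omega i t))) /\
     measurable_fun setT (fun t => complex.Im (U eps (fun i => omega i t))).

Definition RemF (n : nat) (u : R[i]) (a1 a2 a3 : T -> R[i]) (b : R -> T -> R[i])
    (eps : R) (t : T) : R[i] :=
  'C(n,1)%:R * u ^+ (n - 1) * b eps t
  + 'C(n,2)%:R * u ^+ (n - 2) * (2%:R * a1 t * (a3 t + cR eps * b eps t)
       + (a2 t + cR eps * a3 t + cR eps ^+ 2 * b eps t) ^+ 2)
  + 'C(n,3)%:R * u ^+ (n - 3) * (3%:R * a1 t ^+ 2 * (a2 t + cR eps * a3 t + cR eps ^+ 2 * b eps t)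
       + 3%:R * cR eps * a1 t * (a2 t + cR eps * a3 t + cR eps ^+ 2 * b eps t) ^+ 2
       + cR eps ^+ 2 * (a2 t + cR eps * a3 t + cR eps ^+ 2 * b eps t) ^+ 3)
  + (a1 t + cR eps * a2 t + cR eps ^+ 2 * a3 t + cR eps ^+ 3 * b eps t) ^+ 4 *
    \sum_(4 <= k < n.+4) u ^+ (n - k) *
       (cR eps * (a1 t + cR eps * a2 t + cR eps ^+ 2 * a3 t + cR eps ^+ 3 * b eps t)) ^+ (k - 4)
       * 'C(n, k)%:R.

Ltac nice_step :=
  match goal with
  | |- nice (fun e t => _ + _) => apply: niceD
  | |- nice (fun e t => _ * _) => apply: niceM
  | |- nice (fun e t => _ ^+ _) => apply: niceX
  | |- nice (fun e t => \sum_(_ <- _) _) => apply: nice_sum => ?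
  | |- nice (fun e t => cR e) => exact: nice_eps
  | |- _ => first [assumption | exact: nice_cst]
  end.
Ltac nice_tac := repeat nice_step.

Lemma nice_RemF n u (a1 a2 a3 : T -> R[i]) (b : R -> T -> R[i]) :
  nice (fun _ t => a1 t) -> nice (fun _ t => a2 t) -> nice (fun _ t => a3 t) ->
  nice (fun eps t => b eps t) -> nice (RemF n u a1 a2 a3 b).
Proof. move=> n1 n2 n3 nb; rewrite /RemF; nice_tac. Qed.

Lemma nice_tay_abs u (a1 a2 a3 : T -> R[i]) (b : R -> T -> R[i]) :
  nice (fun _ t => a1 t) -> nice (fun _ t => a2 t) -> nice (fun _ t => a3 t) ->
  nice (fun eps t => b eps t) ->
  nice (fun eps t => u + cR eps * a1 t + cR eps ^+ 2 * a2 t + cR eps ^+ 3 * a3 t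
                     + cR eps ^+ 4 * b eps t).
Proof. move=> n1 n2 n3 nb; nice_tac. Qed.

Lemma main_n n : eq_O4 (moment omega U n)
  (fun eps => u0 ^+ n + cR (eps ^+ 2 / 3%:R) *
     \sum_(i < m) ('C(n, 2)%:R * u0 ^+ (n - 2) * (@D 1 [tuple i]) ^+ 2
        + 'C(n, 1)%:R * u0 ^+ (n - 1) * (cR (1 / 2) * @D 2 [tuple i; i]))).
Proof.
have [C [delta [delta_gt0 HT]]] := Htay.
have [delta0 [delta0_gt0 HM]] := Hmeas.
pose c1 : R[i] := 'C(n,1)%:R; pose c2 : R[i] := 'C(n,2)%:R; pose c3 : R[i] := 'C(n,3)%:R.
pose p1 := u0 ^+ (n - 1); pose p2 := u0 ^+ (n - 2); pose p3 := u0 ^+ (n - 3).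
have nA1 : nice (fun _ t => A1 t) by exact: nice_SS.
have nA2 : nice (fun _ t => A2 t) by apply: niceM; [exact: nice_cst | exact: nice_SS].
have nA3 : nice (fun _ t => A3 t) by apply: niceM; [exact: nice_cst | exact: nice_SS].
have nB : nice (fun eps t => Bt eps t) := nice_Bt.
have nRem := nice_RemF n u0 nA1 nA2 nA3 nB.
have nG : nice (fun eps t => Tay eps (wt t)).
  apply: (nice_ext (fun e t => esym (Tay_split e t))); exact: nice_tay_abs.
have [MR HMR] := nRem.2.
have [MT HMT] := nG.2.
pose K := MT + `|C|.
pose CC := n%:R * K ^+ n.-1 * `|C|.
exists (MR + MR + (CC + CC)), (Num.min (Num.min delta delta0) 1).
split; first by rewrite !lt_min delta_gt0 delta0_gt0 ltr01.
move=> eps; rewrite !lt_min => /andP[/andP[ed ed0] e1].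
have e4 : `|eps| ^+ 4 <= 1 by rewrite exprn_ile1 // ltW.
pose F t := U eps (wt t).
pose G t := Tay eps (wt t).
have box t : Om t -> forall i, -1 <= wt t i <= 1.
  by move=> Ht i; have /andP[w1 w2] := Om_in Ht i; rewrite w1 ltW.
have Hdiff t : Om t -> cabs (F t - G t) <= `|C| * `|eps| ^+ 4.
  move=> Ht; have H := HT eps ed (wt t) (box t Ht).
  apply: le_trans H _.
  apply: le_trans (_ : _ <= `|C| * `|eps| ^+ N.+1) _.
    by apply: ler_wpM2r; [exact: exprn_ge0 | exact: ler_norm].
  apply: ler_wpM2l => //; apply: pow4_le => //; first exact: ltW.
have HG t : Om t -> cabs (G t) <= MT by move=> Ht; exact: HMT.
have HF t : Om t -> cabs (F t) <= K.
  move=> Ht; have -> : F t = G t + (F t - G t) by rewrite addrC subrK.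
  apply: le_trans (cabsD _ _) _; apply: lerD; first exact: HG.
  by apply: le_trans (Hdiff t Ht) _; rewrite ler_piMr.
have mF : cmeas F by exact: HM.
have bFn : cbnd (fun t => F t ^+ n).
  split; first exact: cmeasX.
  exists (K ^+ n) => t Ht; rewrite cabsX; apply: lerXn2r; last exact: HF.
    by rewrite nnegrE cabs_ge0.
  by rewrite nnegrE (le_trans (cabs_ge0 _) (HF t Ht)).
have bGn : cbnd (fun t => G t ^+ n) := nice_cbnd (niceX n nG) e1.
have bD : cbnd (fun t => F t ^+ n - G t ^+ n) := cbndB bFn bGn.
rewrite /moment (cexpect_CE0 bFn).
rewrite (CE0_ext (g := fun t => G t ^+ n + (F t ^+ n - G t ^+ n))); last first.
  by move=> t _; rewrite addrC subrK.
rewrite CE0D //.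
have EG t : G t ^+ n = u0 ^+ n + cR eps * (c1 * p1 * A1 t)
    + cR eps ^+ 2 * (c1 * p1 * A2 t + c2 * p2 * A1 t ^+ 2)
    + cR eps ^+ 3 * (c1 * p1 * A3 t + 2%:R * c2 * p2 * (A1 t * A2 t) + c3 * p3 * A1 t ^+ 3)
    + cR eps ^+ 4 * RemF n u0 A1 A2 A3 Bt eps t.
  have -> : G t = u0 + (cR eps * A1 t + cR eps ^+ 2 * A2 t + cR eps ^+ 3 * A3 t
      + cR eps ^+ 4 * Bt eps t) by rewrite /G Tay_split !addrA.
  by rewrite binom_expand.
rewrite (CE0_ext (fun t _ => EG t)).
have cA1 : cbnd (fun t => A1 t) := cbnd_SS 1.
have cA2 : cbnd (fun t => A2 t) by apply: cbndM; [exact: cbnd_cst | exact: cbnd_SS].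
have cA3 : cbnd (fun t => A3 t) by apply: cbndM; [exact: cbnd_cst | exact: cbnd_SS].
rewrite CE0_lin; last 4 first.
- by repeat cb_step.
- by repeat cb_step.
- by repeat cb_step.
- exact: nice_cbnd nRem e1.
rewrite (CE0Ml (c1 * p1) cA1) CE0_A1 mulr0.
rewrite (@CE0D (fun t => c1 * p1 * A2 t) (fun t => c2 * p2 * A1 t ^+ 2)); [|by repeat cb_step|by repeat cb_step].
rewrite (CE0Ml (c1 * p1) cA2) CE0_A2.
rewrite (@CE0Ml (c2 * p2) (fun t => A1 t ^+ 2)); last by repeat cb_step.
rewrite CE0_A1sq.
rewrite (@CE0D (fun t => c1 * p1 * A3 t + 2%:R * c2 * p2 * (A1 t * A2 t))
   (fun t => c3 * p3 * A1 t ^+ 3)); [|by repeat cb_step|by repeat cb_step].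
rewrite (@CE0D (fun t => c1 * p1 * A3 t) (fun t => 2%:R * c2 * p2 * (A1 t * A2 t)));
  [|by repeat cb_step|by repeat cb_step].
rewrite (CE0Ml (c1 * p1) cA3) CE0_A3.
rewrite (@CE0Ml (2%:R * c2 * p2) (fun t => A1 t * A2 t)); last by repeat cb_step.
rewrite CE0_A1A2.
rewrite (@CE0Ml (c3 * p3) (fun t => A1 t ^+ 3)); last by repeat cb_step.
rewrite CE0_A1cube.
set CR := CE0 (RemF n u0 A1 A2 A3 Bt eps).
set CD := CE0 (fun t => F t ^+ n - G t ^+ n).
have Hs : \sum_(i < m) ('C(n, 2)%:R * u0 ^+ (n - 2) * (@D 1 [tuple i]) ^+ 2
        + 'C(n, 1)%:R * u0 ^+ (n - 1) * (cR (1 / 2) * @D 2 [tuple i; i])) =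
    c2 * p2 * \sum_(i < m) (@D 1 [tuple i]) ^+ 2
    + c1 * p1 * (cR (1 / 2) * \sum_(i < m) @D 2 [tuple i; i]).
  by rewrite big_split /= -!mulr_sumr.
rewrite Hs cRM cRX.
set S1 := \sum_(i < m) (@D 1 [tuple i]) ^+ 2.
set S2 := \sum_(i < m) @D 2 [tuple i; i].
have -> : u0 ^+ n + cR eps * 0 +
    cR eps ^+ 2 * (c1 * p1 * (cR (1 / 2) * (cR 3^-1 * S2)) + c2 * p2 * (cR 3^-1 * S1)) +
    cR eps ^+ 3 * (c1 * p1 * 0 + 2%:R * c2 * p2 * 0 + c3 * p3 * 0) + cR eps ^+ 4 * CR + CD -
    (u0 ^+ n + cR eps ^+ 2 * cR 3^-1 * (c2 * p2 * S1 + c1 * p1 * (cR (1 / 2) * S2))) =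
    cR eps ^+ 4 * CR + CD by ring.
apply: le_trans (cabsD _ _) _.
have HR : cabs (cR eps ^+ 4 * CR) <= (MR + MR) * `|eps| ^+ 4.
  rewrite cabsM cabsX cabs_cR mulrC ler_wpM2r ?exprn_ge0 //.
  apply: CE0_le; first exact: nice_cbnd nRem e1.
  by move=> t Ht; exact: HMR.
have HDf : cabs CD <= CC * `|eps| ^+ 4 + CC * `|eps| ^+ 4.
  apply: CE0_le => // t Ht.
  apply: le_trans (cpowdiff _ (HF t Ht) _) _.
    by apply: le_trans (HG t Ht) _; rewrite lerDl.
  rewrite /CC -[X in _ <= X]mulrA; apply: ler_wpM2l; last exact: Hdiff.
  by rewrite mulr_ge0 // exprn_ge0 // (le_trans (cabs_ge0 _) (HF t Ht)).
apply: le_trans (lerD HR HDf) _.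
by rewrite -mulrDl -mulrDl.
Qed.

End Taylor.
End Prob.

Lemma eq_O4_ext (R : realType) (f g g' : R -> R[i]) :
  eq_O4 f g -> (forall eps, g eps = g' eps) -> eq_O4 f g'.
Proof. by move=> H gg; have <- : g = g' by apply: funext. Qed.

Unset Implicit Arguments. Set Strict Implicit. Set Printing Implicit Defensive.

Theorem theorem4p1 (R : realType) (d : measure_display) (T : measurableType d)
  (P : probability T R) (m N : nat) (omega : 'I_m -> {RV P >-> R})
  (U : R -> ('I_m -> R) -> R[i]) (u0 : R[i])
  (D : forall q : nat, q.-tuple 'I_m -> R[i]) :
  mutually_independent omega ->
  (forall i, uniform_m11 (omega i)) ->
  (3 <= N)%N ->
  shape_taylor N U u0 D ->
  (exists delta0 : R, 0 < delta0 /\ forall eps : R, `|eps| < delta0 ->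
     measurable_fun setT (fun t => complex.Re (U eps (fun i => omega i t))) /\
     measurable_fun setT (fun t => complex.Im (U eps (fun i => omega i t)))) ->
  [/\ eq_O4 (moment omega U 1)
        (fun eps => u0 + cR (eps ^+ 2 / (3`!)%:R) *
                         \sum_(i < m) D 2%N [tuple i; i]),
      eq_O4 (moment omega U 2)
        (fun eps => u0 ^+ 2 + cR (eps ^+ 2 / 3%:R) *
            \sum_(i < m) ((D 1%N [tuple i]) ^+ 2 + u0 * D 2%N [tuple i; i]))
    & forall n : nat, (2 < n)%N ->
      eq_O4 (moment omega U n)
        (fun eps => u0 ^+ n + cR (eps ^+ 2 / 3%:R) *
            \sum_(i < m) ('C(n, 2)%:R * u0 ^+ (n - 2) * (D 1%N [tuple i]) ^+ 2
                          + 'C(n, 1)%:R * u0 ^+ (n - 1) * (cR (1 / 2) * D 2%N [tuple i; i])))].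
Proof.
move=> Hind Hunif HN Htay Hmeas.
have M := main_n Hind Hunif HN Htay Hmeas.
split.
- apply: eq_O4_ext (M 1%N) _ => eps.
  rewrite expr1; congr (_ + _).
  have -> : (3`!)%:R = 6 :> R by [].
  rewrite bin_small // bin1 /=.
  rewrite (eq_bigr (fun i => cR (1 / 2) * D 2%N [tuple i; i])); last first.
    by move=> i _; rewrite /=; ring.
  rewrite -mulr_sumr mulrA -cRM; congr (cR _ * _).
  by rewrite mul1r -mulrA -invfM; congr (_ / _); rewrite -natrM.
- apply: eq_O4_ext (M 2%N) _ => eps.
  congr (_ + _ * _); apply: eq_bigr => i _.
  rewrite binn bin1 /=.
  have h2 : (2%:R : R[i]) * cR (1 / 2) = 1.
    by rewrite -cRn -cRM div1r mulfV ?pnatr_eq0 // cR1.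
  rewrite -[LHS]/(1%:R * u0 ^+ 0 * D 1%N [tuple i] ^+ 2 + 2%:R * u0 ^+ 1 * (cR (1 / 2) * D 2%N [tuple i; i])).
  have -> : (2%:R : R[i]) * u0 ^+ 1 * (cR (1 / 2) * D 2%N [tuple i; i]) = 
     (2%:R * cR (1 / 2)) * (u0 * D 2%N [tuple i; i]) by ring.
  by rewrite h2 expr0 !mul1r.
- by move=> n _; exact: M.
Qed.
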